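(* Let $f:M\to N$ be a proximity morphism between MT-algebras. Then: (1) $f(\neg x)=\neg f(x)$ for each $x\in\mathcal O M\cup\mathcal C M$; (2) the restriction $f|_{\mathcal C M}$ maps $\mathcal C M$ into $\mathcal C N$ and is a co-frame morphism $\mathcal C M\to\mathcal C N$ (preserves finite joins and arbitrary meets); (3) if $x\in\mathcal{LC}M$ then $f(x)\in\mathcal{LC}N$; (4) $f|_{\mathrm{cons}\,M}$ maps $\mathrm{cons}\,M$ into $\mathrm{cons}\,N$ and is a boolean homomorphism $\mathrm{cons}\,M\to\mathrm{cons}\,N$.
   Context: An MT-algebra is a pair $(M,\square)$ where $M$ is a complete boolean algebra and $\square:M\to M$ satisfies $\square 1=1$, $\square(a\wedge b)=\square a\wedge\square b$, $\square a\le a$, $\square a\le\square\square a$. Write $\Diamond a=\neg\square\neg a$. An element $a$ is open if $\square a=a$, closed if $\Diamond a=a$, and locally closed if $a=\square b\wedge\Diamond c$ for some $b,c\in M$; $\mathcal O M$, $\mathcal C M$, $\mathcal{LC} M$ denote the sets of open, closed, locally closed elements; $\mathcal O M$ is a frame. $\mathrm{cons}\,M$ is the set of finite joins of elements of $\mathcal{LC}M$ (the boolean subalgebra generated by $\mathcal O M$). A proximity morphism between MT-algebras $M,N$ is a map $f:M\to N$ such that: (P1) $f$ maps $\mathcal O M$ into $\mathcal O N$ and $f|_{\mathcal O M}:\mathcal O M\to\mathcal O N$ is a frame morphism (preserves arbitrary joins and finite meets); (P2) $f(a\wedge b)=f(a)\wedge f(b)$ for all $a,b\in M$; (P3) $f(\bigvee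 S)=\bigvee\{f(s):s\in S\}$ for every finite $S\subseteq\mathcal{LC}M$; (P4) $f(a)=\bigvee\{f(x): x\in\mathcal{LC}M,\ x\le a\}$ for every $a\in M$. *)

(* Defs.v *)
(* boolean algebras as mathcomp-order ctbDistrLatticeType
   (complemented distributive lattices with top and bottom = boolean algebras),
   completeness given by a supremum operator on arbitrary subsets. *)
From HB Require Import structures.
From mathcomp Require Import all_boot all_order.
Set Implicit Arguments. Unset Strict Implicit. Unset Printing Implicit Defensive.
Import Order.Theory.
Local Open Scope order_scope.

Record MTAlgebra := {
  mt_disp : Order.disp_t;
  mt_car :> ctbDistrLatticeType mt_disp;
  mt_sup : (mt_car -> Prop) -> mt_car;
  mt_sup_ub : forall (S : mt_car -> Prop) s, S s -> s <= mt_sup S;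
  mt_sup_least : forall (S : mt_car -> Prop) u,
      (forall s, S s -> s <= u) -> mt_sup S <= u;
  mt_box : mt_car -> mt_car;
  mt_box_top : mt_box \top = \top;
  mt_box_meet : forall a b, mt_box (a `&` b) = mt_box a `&` mt_box b;
  mt_box_le : forall a, mt_box a <= a;
  mt_box_idem : forall a, mt_box a <= mt_box (mt_box a)
}.

Section MTDefs.
Variable M : MTAlgebra.

Definition sup (S : M -> Prop) : M := mt_sup S.
Definition inf (S : M -> Prop) : M := mt_sup (fun x => forall s, S s -> x <= s).
Definition box (a : M) : M := mt_box a.
Definition dia (a : M) : M := ~` (box (~` a)).

Definition is_open (a : M) : Prop := box a = a.
Definition is_closed (a : M) : Prop := dia a = a.
Definition is_lc (a : M) : Prop := exists b c : M, a = box b `&` dia c.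
Definition fjoin (s : seq M) : M := \join_(x <- s) x.
Definition is_cons (a : M) : Prop :=
  exists s : seq M, (forall x, x \in s -> is_lc x) /\ a = fjoin s.
End MTDefs.

Definition img (A B : Type) (f : A -> B) (S : A -> Prop) : B -> Prop :=
  fun y => exists2 x, S x & y = f x.

Definition proximity (M N : MTAlgebra) (f : M -> N) : Prop :=
  (* (P1) f maps opens to opens and is a frame morphism O M -> O N
     (joins and meets of opens in O M are computed in M) *)
  [/\ (forall a : M, is_open a -> is_open (f a)),
      (forall S : M -> Prop, (forall s, S s -> is_open s) ->
          f (sup S) = sup (img f S)),
      f \top = \top &
      (forall a b : M, is_open a -> is_open b -> f (a `&` b) = f a `&` f b)]
  (* (P2) *)
  /\ (forall a b : M, f (a `&` b) = f a `&` f b)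
  (* (P3) *)
  /\ (forall s : seq M, (forall x, x \in s -> is_lc x) ->
        f (fjoin s) = fjoin (map f s))
  (* (P4) *)
  /\ (forall a : M, f a = sup (img f (fun x => is_lc x /\ x <= a))).

(* Main.v *)
Require Import Defs.
From mathcomp Require Import all_boot all_order.
Import Order.Theory.
Local Open Scope order_scope.

Section Gen.
Variables (d : Order.disp_t) (L : ctbDistrLatticeType d).
Lemma compl_uniq (a b : L) : a `&` b = \bot -> a `|` b = \top -> b = ~` a.
Proof.
move=> H1 H2; apply/le_anti/andP; split.
  by rewrite -disj_leC meetC H1.
rewrite leCx.
have -> : ~` b = ~` b `&` (a `|` b) by rewrite H2 meetx1.
by rewrite meetUr meetCx joinx0 leIr.
Qed.
End Gen.

Section MT.
Variable M : MTAlgebra.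
Implicit Types a b : M.

Lemma sup_ub' (S : M -> Prop) s : S s -> s <= sup S.
Proof. exact: mt_sup_ub. Qed.
Lemma sup_least' (S : M -> Prop) u : (forall s, S s -> s <= u) -> sup S <= u.
Proof. exact: mt_sup_least. Qed.
Lemma sup_ext (S T : M -> Prop) : (forall x, S x <-> T x) -> sup S = sup T.
Proof.
move=> H; apply/le_anti/andP; split; apply: sup_least' => s Hs;
  apply: sup_ub'; by apply/H.
Qed.
Lemma inf_compl (S : M -> Prop) :
  inf S = ~` sup (img (@Order.compl _ M) S).
Proof.
apply/le_anti/andP; split.
  rewrite lexC; apply: sup_least' => t [s Ss ->].
  rewrite leC; apply: mt_sup_least => u Hu; exact: Hu s Ss.
apply: mt_sup_ub => s Ss; rewrite leCx; apply: sup_ub'; by exists s.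
Qed.

Lemma box_mono a b : a <= b -> box a <= box b.
Proof.
move=> /meet_idPl H; rewrite /box -H mt_box_meet; exact: leIr.
Qed.
Lemma box_bot : box (\bot : M) = \bot.
Proof. apply/le_anti; rewrite le0x andbT; exact: mt_box_le. Qed.
Lemma dia_top : dia (\top : M) = \top.
Proof. by rewrite /dia compl1 box_bot compl0. Qed.
Lemma box_open a : is_open (box a).
Proof. apply/le_anti; rewrite mt_box_le; exact: mt_box_idem. Qed.
Lemma dia_closed a : is_closed (dia a).
Proof. by rewrite /is_closed /dia complK; have := box_open (~` a); rewrite /is_open => ->. Qed.
Lemma open_compl a : is_open a -> is_closed (~` a).
Proof. by rewrite /is_open /is_closed /dia complK => ->. Qed.
Lemma closed_compl a : is_closed a -> is_open (~` a).
Proof. by rewrite /is_open /is_closed /dia => <-; rewrite complK; exact: box_open. Qed.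
Lemma open_lc a : is_open a -> is_lc a.
Proof. by move=> H; exists a, \top; rewrite dia_top meetx1 H. Qed.
Lemma closed_lc a : is_closed a -> is_lc a.
Proof. by move=> H; exists \top, a; rewrite /box mt_box_top meet1x H. Qed.
Lemma sup_open (S : M -> Prop) : (forall s, S s -> is_open s) -> is_open (sup S).
Proof.
move=> H; apply/le_anti; rewrite mt_box_le /=; apply: sup_least' => s Ss.
rewrite -(H s Ss); apply: box_mono; exact: sup_ub'.
Qed.
End MT.

Lemma fjoin_cons (M : MTAlgebra) (x : M) s : fjoin (x :: s) = x `|` fjoin s.
Proof. by rewrite /fjoin big_cons. Qed.
Lemma fjoin_cat (M : MTAlgebra) (s t : seq M) : fjoin (s ++ t) = fjoin s `|` fjoin t.
Proof. by rewrite /fjoin big_cat. Qed.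
Lemma fjoin_nil (M : MTAlgebra) : fjoin ([::] : seq M) = \bot.
Proof. by rewrite /fjoin big_nil. Qed.

Theorem lemma3p9 (M N : MTAlgebra) (f : M -> N) (hf : proximity f) :
  (* (1) *)
  (forall x : M, is_open x \/ is_closed x -> f (~` x) = ~` (f x))
  (* (2) co-frame morphism C M -> C N *)
  /\ [/\ (forall x : M, is_closed x -> is_closed (f x)),
         f \bot = \bot,
         (forall x y : M, is_closed x -> is_closed y ->
            f (x `|` y) = f x `|` f y) &
         (forall S : M -> Prop, (forall s, S s -> is_closed s) ->
            f (inf S) = inf (img f S))]
  (* (3) *)
  /\ (forall x : M, is_lc x -> is_lc (f x))
  (* (4) boolean homomorphism cons M -> cons N *)
  /\ (forall x : M, is_cons x -> is_cons (f x))
  /\ [/\ f \bot = \bot, f \top = \top,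
         (forall x y : M, is_cons x -> is_cons y -> f (x `&` y) = f x `&` f y),
         (forall x y : M, is_cons x -> is_cons y -> f (x `|` y) = f x `|` f y) &
         (forall x : M, is_cons x -> f (~` x) = ~` (f x))].
Proof.
case: hf => [[Pop Psup Ptop Pmeet2]] [P2] [P3] P4.
have fbot : f \bot = \bot.
  by have := P3 [::] (fun x (xs : x \in [::]) => False_ind _ (notF xs)); rewrite fjoin_nil /= fjoin_nil.
have join2 : forall x y : M, is_lc x -> is_lc y -> f (x `|` y) = f x `|` f y.
  move=> x y Hx Hy.
  have := P3 [:: x; y]; rewrite !fjoin_cons !fjoin_nil /= !joinx0; apply.
  by move=> z; rewrite !inE => /orP [] /eqP ->.
have fopen : forall x : M, is_open x -> f (~` x) = ~` f x.
  move=> x Hx; apply: compl_uniq.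
    by rewrite -P2 meetxC fbot.
  by rewrite -join2 ?joinxC ?Ptop //; [exact: open_lc | apply: closed_lc; exact: open_compl].
have f1 : forall x : M, is_open x \/ is_closed x -> f (~` x) = ~` (f x).
  move=> x [Hx|Hx]; first exact: fopen.
  have Ho := @closed_compl M x Hx.
  by rewrite -{2}(complK x) (fopen _ Ho) complK.
have fclosed : forall x : M, is_closed x -> is_closed (f x).
  move=> x Hx; rewrite -(complK x) fopen; last exact: closed_compl.
  apply: open_compl; apply: Pop; exact: closed_compl.
have f3 : forall x : M, is_lc x -> is_lc (f x).
  move=> x [b [c ->]]; rewrite P2; exists (f (box b)), (f (dia c)).
  have -> : box (f (box b)) = f (box b) by apply: Pop; exact: box_open.
  by have -> : dia (f (dia c)) = f (dia c) by apply: fclosed; exact: dia_closed.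
have lccompl : forall x : M, is_lc x -> f (~` x) = ~` f x.
  move=> x [b [c ->]]; rewrite complI join2; last first.
      apply: open_lc; apply: closed_compl; exact: dia_closed.
    apply: closed_lc; apply: open_compl; exact: box_open.
  rewrite P2 complI (fopen _ (@box_open M b)) (f1 _ (or_intror (@dia_closed M c))).
  done.
split; first exact: f1.
split.
  split => //.
    by move=> x y Hx Hy; apply: join2; exact: closed_lc.
  move=> S HS; rewrite !inf_compl f1; last first.
    left; apply: sup_open => t [s Ss ->]; apply: closed_compl; exact: HS.
  rewrite Psup; last by move=> t [s Ss ->]; apply: closed_compl; exact: HS.
  congr (~` _); apply: sup_ext => y; split.
    move=> [t [s Ss ->] ->]; exists (f s); first by exists s.
    by rewrite f1 //; right; exact: HS.
  move=> [z [s Ss ->] ->]; exists (~` s); first by exists s.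
  by rewrite f1 //; right; exact: HS.
split; first exact: f3.
split.
  move=> x [s [Hs ->]]; exists (map f s); split; last exact: P3.
  by move=> y /mapP [z Hz ->]; apply: f3; exact: Hs.
split => //.
- move=> x y [s [Hs ->]] [t [Ht ->]]; rewrite -fjoin_cat P3 ?map_cat ?fjoin_cat ?P3 //.
  by move=> z; rewrite mem_cat => /orP []; [exact: Hs | exact: Ht].
- move=> x [s [Hs ->]]; elim: s Hs => [|y s IH] Hs.
    by rewrite fjoin_nil compl0 Ptop fbot compl0.
  have Hs' : forall z, z \in s -> is_lc z by move=> z Hz; apply: Hs; rewrite inE Hz orbT.
  have Hy : is_lc y by apply: Hs; rewrite inE eqxx.
  rewrite fjoin_cons complU P2 IH // lccompl // -complU.
  by rewrite -fjoin_cons (P3 (y::s) Hs) /= fjoin_cons (P3 s Hs').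
Qed.
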